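(* Let $(\Omega,\mathcal{F},P_0)$ be a complete probability space, $\epsilon\in(0,1)$, $\mathcal{C}\subseteq\mathcal{F}$ a sub-$\sigma$-algebra, and $\rho:L^{2+\epsilon}_{\mathcal{F}}(\Omega,P_0)\to\mathbb{R}$ a sublinear operator with representation set $\mathcal{P}$. Suppose $\rho$ is stable and proper. Then for any $P\in\mathcal{P}$ and any integrable random variable $\xi$ (so that the expectations below are well defined), there exists $\bar P\in\mathcal{P}$ such that $$E_{\bar P}[\xi]=E_{P_0}\big[E_P[\xi\mid\mathcal{C}]\big].$$
   Context: A sublinear operator is a map $\rho:L^{2+\epsilon}_{\mathcal{F}}(\Omega,P_0)\to\mathbb{R}$ that is monotone ($\xi_1\ge\xi_2\Rightarrow\rho(\xi_1)\ge\rho(\xi_2)$), constant preserving ($\rho(c)=c$), sub-additive ($\rho(\xi_1+\xi_2)\le\rho(\xi_1)+\rho(\xi_2)$) and positively homogeneous ($\rho(\lambda\xi)=\lambda\rho(\xi)$ for $\lambda\ge0$). Its representation set $\mathcal{P}$ is the family of all linear expectations (identified with probability measures $P$) dominated by $\rho$, so that $\rho(\xi)=\max_{P\in\mathcal{P}}E_P[\xi]$. For $P\in\mathcal{P}$ write $f^P=\frac{dP}{dP_0}$ and $\mathcal{D}=\{f^P:P\in\mathcal{P}\}$. $\rho$ is proper if every $P\in\mathcal{P}$ is equivalent to $P_0$. $\rho$ (equivalently $\mathcal{P}$) is stable if for each $P\in\mathcal{P}$, with $f^P_{\mathcal{C}}:=E_{P_0}[f^P\mid\mathcal{C}]$, the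 random variable $f^P/f^P_{\mathcal{C}}$ lies in $\mathcal{D}$. Standing assumption: $\mathcal{D}$ is norm-bounded in $L^{1+\frac{2}{\epsilon}}_{\mathcal{F}}(P_0)$ and compact for the weak topology $\sigma(L^{1+\frac{2}{\epsilon}}(P_0),L^{1+\frac{\epsilon}{2}}(P_0))$. *)

(* Defs.v *)
From HB Require Import structures.
From mathcomp Require Import all_boot all_order all_algebra.
From mathcomp Require Import all_classical all_reals all_analysis.
Set Implicit Arguments. Unset Strict Implicit. Unset Printing Implicit Defensive.
Import Order.TTheory GRing.Theory Num.Theory.
Local Open Scope classical_set_scope.
Local Open Scope ring_scope.

Section Defs.
Context {R : realType} {d : measure_display} {T : measurableType d}.
Variable P0 : probability T R.

Definition inLp (p : R) (f : T -> R) : Prop :=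
  measurable_fun setT f /\ (Lnorm P0 p%:E (EFin \o f) < +oo)%E.

Definition is_sub_sigma_algebra (C : set (set T)) : Prop :=
  sigma_algebra setT C /\ C `<=` measurable.

Definition C_measurable (C : set (set T)) (eta : T -> R) : Prop :=
  forall B : set R, measurable B -> C (eta @^-1` B).

(* sublinear operator rho on L^{p}(P0) (functions identified P0-a.e.;
   monotonicity is with respect to the P0-a.e. order) *)
Definition sublinear_op (p : R) (rho : (T -> R) -> R) : Prop :=
  [/\ (forall xi1 xi2, inLp p xi1 -> inLp p xi2 ->
         (\forall x \ae P0, xi2 x <= xi1 x) -> rho xi2 <= rho xi1),
      (forall c : R, rho (cst c) = c),
      (forall xi1 xi2, inLp p xi1 -> inLp p xi2 ->
         rho (xi1 \+ xi2) <= rho xi1 + rho xi2) &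
      (forall (lam : R) xi, 0 <= lam -> inLp p xi ->
         rho (fun x => lam * xi x) = lam * rho xi)].

(* f is the density dP/dP0 of a probability measure P << P0 *)
Definition is_density (f : T -> R) : Prop :=
  [/\ measurable_fun setT f,
      (\forall x \ae P0, 0 <= f x) &
      (\int[P0]_x (f x)%:E = 1)%E].

(* The set D = { f^P : P in the representation set of rho }:
   densities of the probability measures P (P << P0) whose expectation
   E_P[xi] = E_{P0}[f xi] is dominated by rho on L^{2+eps}(P0). *)
Definition repD (eps : R) (rho : (T -> R) -> R) : set (T -> R) :=
  [set f | is_density f /\
     forall xi, inLp (2 + eps) xi ->
       P0.-integrable setT (fun x => (xi x * f x)%:E) /\
       (\int[P0]_x (xi x * f x)%:E <= (rho xi)%:E)%E].

(* eta is a version of the conditional expectation E_P[xi | C], where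
   P is the probability measure with density f w.r.t. P0 *)
Definition cond_exp (C : set (set T)) (f xi eta : T -> R) : Prop :=
  [/\ C_measurable C eta,
      P0.-integrable setT (fun x => (eta x * f x)%:E) &
      forall A, C A ->
        (\int[P0]_(x in A) (eta x * f x)%:E =
         \int[P0]_(x in A) (xi x * f x)%:E)%E].

(* stability: for f = f^P in D and f_C = E_{P0}[f | C], f / f_C is in D *)
Definition stable (eps : R) (C : set (set T)) (rho : (T -> R) -> R) : Prop :=
  forall f, repD eps rho f ->
    exists2 fC, cond_exp C (cst 1) f fC & repD eps rho (fun x => f x / fC x).

Definition proper_op (eps : R) (rho : (T -> R) -> R) : Prop :=
  forall f, repD eps rho f ->
    forall A, measurable A ->
      (P0 A = 0 <-> \int[P0]_(x in A) (f x)%:E = 0)%E.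

(* weak compactness of a set S of L^q functions for sigma(L^q, L^q'):
   every proper filter containing S has a cluster point g in S for the
   weak topology (basic neighbourhoods given by finitely many functionals
   h in L^q'). *)
Definition weakly_compact (q q' : R) (S : set (T -> R)) : Prop :=
  forall F : set_system (T -> R), ProperFilter F -> F S ->
    exists2 g, S g &
      forall A, F A -> forall (hs : seq (T -> R)) (del : R), 0 < del ->
        (forall h, h \in hs -> inLp q' h) ->
        exists2 f, A f & forall h, h \in hs ->
          `| fine (\int[P0]_x ((f x - g x) * h x)%:E) | < del.

Definition standing_assumption (eps : R) (rho : (T -> R) -> R) : Prop :=
  (exists M : R, forall f, repD eps rho f ->
      inLp (1 + 2 / eps) f /\ (Lnorm P0 (1 + 2 / eps)%:E (EFin \o f) <= M%:E)%E)
  /\ weakly_compact (1 + 2 / eps) (1 + eps / 2) (repD eps rho).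

End Defs.

(* Main.v *)
Require Import Defs.
From HB Require Import structures.
From mathcomp Require Import all_boot all_order all_algebra.
From mathcomp Require Import all_classical all_reals all_analysis.
From mathcomp Require Import measurable_realfun lra.
Import Order.TTheory GRing.Theory Num.Theory.
Local Open Scope classical_set_scope.
Local Open Scope ring_scope.

Lemma measV (R : realType) : measurable_fun [set: R] (@GRing.inv R).
Proof.
have -> : [set: R] = ~` [set 0] `|` [set 0] by rewrite setvU.
apply/(measurable_funU _ (measurableC (measurable_set1 (0:R))) (measurable_set1 (0:R))); split; last exact: measurable_fun_set1.
apply: open_continuous_measurable_fun; first by rewrite openC; exact: closed_eq.
move=> x; rewrite inE => /eqP x0; exact: inv_continuous.
Qed.

Lemma fin4 (R : realType) (a b c e : \bar R) : a \is a fin_num -> b \is a fin_num ->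
  c \is a fin_num -> e \is a fin_num -> (a + e = c + b)%E -> (a - b = c - e)%E.
Proof.
move: a b c e => [a| |] [b| |] [c| |] [e| |] //= _ _ _ _.
move=> h; have : (a + e)%:E = (c + b)%:E by rewrite !EFinD.
move=> -[] {}h; rewrite -!EFinB; congr EFin; lra.
Qed.

Lemma maxM0 (R : realType) (u c : R) : 0 <= c -> Num.max u 0 * c = Num.max (u * c) 0.
Proof. by move=> c0; rewrite maxr_pMl// mul0r. Qed.
Section K.
Context {R : realType} {d : measure_display} {T : measurableType d}.
Variable mu : {measure set T -> \bar R}.
Variable C : set (set T).
Hypothesis sC : sigma_algebra setT C.
Hypothesis CM : C `<=` measurable.

Local Notation TC := (g_sigma_algebraType C).

Lemma measTC (A : set TC) : measurable A -> C A.
Proof. by move=> mA; rewrite -(sigma_algebra_id sC). Qed.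

Import HBNNSimple.

Lemma K (w1 w2 h : T -> R) :
  measurable_fun setT w1 -> measurable_fun setT w2 ->
  (forall x, 0 <= w1 x) -> (forall x, 0 <= w2 x) ->
  (forall A, C A -> (\int[mu]_(x in A) (w1 x)%:E = \int[mu]_(x in A) (w2 x)%:E)%E) ->
  (forall B : set R, measurable B -> C (h @^-1` B)) ->
  (forall x, 0 <= h x) ->
  (\int[mu]_x (h x * w1 x)%:E = \int[mu]_x (h x * w2 x)%:E)%E.
Proof.
move=> mw1 mw2 w10 w20 hA hC h0.
have mh0 : measurable_fun [set: TC] (h : TC -> R).
  move=> _ B mB; rewrite setTI; apply: sub_gen_smallest; exact: hC.
pose hE : TC -> \bar R := fun x => (h x)%:E.
have mh : measurable_fun [set: TC] hE by apply/measurable_EFinP.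
pose hn := nnsfun_approx (@measurableT _ TC) mh.
have mhn n : measurable_fun [set: T] (hn n : T -> R).
  move=> _ B mB; rewrite setTI; apply: CM; apply: measTC.
  by have := measurable_funP (hn n) measurableT B mB; rewrite setTI.
have key (w : T -> R) : measurable_fun setT w -> (forall x, 0 <= w x) ->
    (\int[mu]_x (h x * w x)%:E = limn (fun n => \int[mu]_x (hn n x * w x)%:E))%E.
  move=> mw w0; rewrite -monotone_convergence//; last 3 first.
  - by move=> n; apply/measurable_EFinP; apply: measurable_funM.
  - by move=> n x _; rewrite lee_fin mulr_ge0.
  - move=> x _ m n mn; rewrite lee_fin ler_wpM2r//.
    by have /lefP := nd_nnsfun_approx measurableT mh mn; exact.
  apply: eq_integral => x _; apply/esym/cvg_lim => //.
  rewrite EFinM; under eq_fun do rewrite EFinM.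
  apply: cvgeZr => //.
  have := @cvg_nnsfun_approx _ _ _ _ measurableT hE mh (fun y _ => h0 y) x I.
  by [].
rewrite (key _ mw1 w10) (key _ mw2 w20); congr (limn _); apply/funext => n.
have simp (w : T -> R) : measurable_fun setT w -> (forall x, 0 <= w x) ->
   (\int[mu]_x (hn n x * w x)%:E = \sum_(k \in range (hn n))
       k%:E * \int[mu]_(x in ((hn n : T -> R) @^-1` [set k])) (w x)%:E)%E.
  move=> mw w0.
  have mpre k : measurable ((hn n : T -> R) @^-1` [set k]).
    rewrite -[X in measurable X]setTI; exact: mhn.
  transitivity (\sum_(k \in range (hn n))
      \int[mu]_x (w x * (k * \1_((hn n : T -> R) @^-1` [set k]) x))%:E)%E.
    under eq_integral => x _ do rewrite (fimfunE (hn n) x) mulrC fsbig_distrr //= -fsumEFin//.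
    rewrite ge0_integral_fsum//.
    - by move=> k; apply/measurable_EFinP; apply: measurable_funM => //; apply: measurable_funM => //; exact: measurable_indic.
    - move=> k x _; rewrite lee_fin mulr_ge0//.
      exact: nnfun_muleindic_ge0.
  apply: eq_fsbigr => k /= kr.
  have k0 : 0 <= k by move: kr; rewrite inE => -[y _ <-]; exact: fun_ge0.
  rewrite -ge0_integralZl_EFin//; last 2 first.
  - by move=> x _; rewrite lee_fin.
  - by apply/measurable_EFinP; exact: measurable_funTS.
  rewrite [RHS]integral_mkcond epatch_indic.
  apply: eq_integral => x _ /=; rewrite -!EFinM; congr (_%:E).
  by rewrite mulrA (mulrC (w x)) -mulrA.
rewrite (simp _ mw1 w10) (simp _ mw2 w20); apply: eq_fsbigr => k _; congr (_ * _)%E.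
apply: hA; apply: measTC.
by have := measurable_funP (hn n) measurableT [set k] (measurable_set1 k); rewrite setTI.
Qed.
End K.

Lemma fin4' (R : realType) (a b c e : \bar R) : a \is a fin_num -> b \is a fin_num ->
  c \is a fin_num -> e \is a fin_num -> (a - b = c - e)%E -> (a + e = c + b)%E.
Proof.
move: a b c e => [a| |] [b| |] [c| |] [e| |] //= _ _ _ _.
move=> h; have : (a - b)%:E = (c - e)%:E by rewrite !EFinB.
move=> -[] {}h; rewrite -!EFinD; congr EFin; lra.
Qed.

Section Main.
Context {R : realType} {d : measure_display} {T : measurableType d}.
Variable P : {measure set T -> \bar R}.
Variable C : set (set T).
Hypothesis sC : sigma_algebra setT C.
Hypothesis CM : C `<=` measurable.
Local Notation TC := (g_sigma_algebraType C).

Lemma toTC (g : T -> R) : (forall B : set R, measurable B -> C (g @^-1` B)) ->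
  measurable_fun [set: TC] (g : TC -> R).
Proof. move=> gC _ B mB; rewrite setTI; apply: sub_gen_smallest; exact: gC. Qed.

Lemma fromTC (g : T -> R) : measurable_fun [set: TC] (g : TC -> R) ->
  forall B : set R, measurable B -> C (g @^-1` B).
Proof.
move=> mg B mB; have := mg measurableT B mB; rewrite setTI => h.
by rewrite -(sigma_algebra_id sC).
Qed.

Lemma TCT (g : T -> R) : measurable_fun [set: TC] (g : TC -> R) ->
  measurable_fun [set: T] g.
Proof. move=> mg _ B mB; rewrite setTI; apply: CM; exact: fromTC. Qed.

Variables (f fC xi eta : T -> R).
Hypothesis mf : measurable_fun setT f.
Hypothesis mxi : measurable_fun setT xi.
Hypothesis fCC : forall B : set R, measurable B -> C (fC @^-1` B).
Hypothesis etaC : forall B : set R, measurable B -> C (eta @^-1` B).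
Hypothesis fCA : forall A, C A ->
  (\int[P]_(x in A) (fC x * cst 1 x)%:E = \int[P]_(x in A) (f x * cst 1 x)%:E)%E.
Hypothesis etaA : forall A, C A ->
  (\int[P]_(x in A) (eta x * f x)%:E = \int[P]_(x in A) (xi x * f x)%:E)%E.
Hypothesis ixf : P.-integrable setT (fun x => (xi x * f x)%:E).
Hypothesis ietaf : P.-integrable setT (fun x => (eta x * f x)%:E).
Hypothesis ixg : P.-integrable setT (fun x => (xi x * (f x / fC x))%:E).
Hypothesis good : \forall x \ae P, 0 <= f x /\ 0 < fC x.

Let mfC : measurable_fun [set: TC] (fC : TC -> R) := @toTC fC fCC.
Let meta : measurable_fun [set: TC] (eta : TC -> R) := @toTC eta etaC.
Let mfCT := @TCT fC mfC.
Let metaT := @TCT eta meta.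

Lemma aeint (D : set T) (g1 g2 : T -> R) : measurable D ->
  measurable_fun D g1 -> measurable_fun D g2 ->
  (forall x, 0 <= f x -> 0 < fC x -> g1 x = g2 x) ->
  (\int[P]_(x in D) (g1 x)%:E = \int[P]_(x in D) (g2 x)%:E)%E.
Proof.
move=> mD m1 m2 h; apply: ae_eq_integral => //.
- exact/measurable_EFinP.
- exact/measurable_EFinP.
apply: filterS good => x [fx fCx] _; by rewrite h.
Qed.

Let F := f^\+.
Let G := fC^\+.
Let q := fun x => (G x)^-1.
Let mq : measurable_fun [set: TC] (q : TC -> R).
Proof. exact: measurableT_comp (measV R) (measurable_funrpos mfC). Qed.
Let q0 x : 0 <= q x.
Proof. by rewrite /q invr_ge0 funrpos_ge0. Qed.

Lemma KF (h : T -> R) : measurable_fun [set: TC] (h : TC -> R) -> (forall x, 0 <= h x) ->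
  (\int[P]_x (h x * F x)%:E = \int[P]_x (h x * G x)%:E)%E.
Proof.
move=> mh h0; apply: (@K _ _ _ P C sC CM) => //.
- exact: measurable_funrpos.
- exact: measurable_funrpos.
- exact: funrpos_ge0.
- exact: funrpos_ge0.
- move=> A CA; have mA := CM _ CA.
  transitivity (\int[P]_(x in A) (f x * cst 1 x)%:E)%E.
    apply: aeint => //.
    + exact/measurable_funTS/measurable_funrpos.
    + by apply/measurable_funTS; apply: measurable_funM.
    + by move=> x fx _; rewrite /F /funrpos /= mulr1; apply/max_idPl.
  rewrite -fCA //; apply: aeint => //.
    + by apply/measurable_funTS; apply: measurable_funM.
    + exact/measurable_funTS/measurable_funrpos.
    + by move=> x _ fCx; rewrite /G /funrpos /= mulr1; apply/esym/max_idPl/ltW.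
- exact: fromTC.
Qed.

Let XF := fun x => xi x * f x.
Let YF := fun x => eta x * f x.
Let mXF : measurable_fun setT XF. Proof. exact: measurable_funM. Qed.
Let mYF : measurable_fun setT YF. Proof. exact: measurable_funM. Qed.
Let Xp := XF^\+.
Let Xn := XF^\-.
Let Yp := YF^\+.
Let Yn := YF^\-.
Let mXp : measurable_fun setT Xp. Proof. exact: measurable_funrpos. Qed.
Let mXn : measurable_fun setT Xn. Proof. exact: measurable_funrneg. Qed.
Let mYp : measurable_fun setT Yp. Proof. exact: measurable_funrpos. Qed.
Let mYn : measurable_fun setT Yn. Proof. exact: measurable_funrneg. Qed.

Lemma intpos (D : set T) (g : T -> R) : measurable D ->
  (\int[P]_(x in D) (g x)%:E = \int[P]_(x in D) (g^\+ x)%:E - \int[P]_(x in D) (g^\- x)%:E)%E.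
Proof.
move=> mD; rewrite integralE.
have -> : (fun x => (g x)%:E) = EFin \o g by [].
by rewrite funerpos funerneg.
Qed.

Lemma KXY (h : T -> R) : measurable_fun [set: TC] (h : TC -> R) -> (forall x, 0 <= h x) ->
  (\int[P]_x (h x * (Xp x + Yn x))%:E = \int[P]_x (h x * (Yp x + Xn x))%:E)%E.
Proof.
move=> mh h0; apply: (@K _ _ _ P C sC CM) => //.
- exact: measurable_funD.
- exact: measurable_funD.
- by move=> x; rewrite addr_ge0 // funrpos_ge0 ?funrneg_ge0.
- by move=> x; rewrite addr_ge0 // funrpos_ge0 ?funrneg_ge0.
- move=> A CA; have mA := CM _ CA.
  have iX : P.-integrable A (EFin \o XF).
    exact: integrableS ixf.
  have iY : P.-integrable A (EFin \o YF).
    exact: integrableS ietaf.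
  have e := etaA _ CA.
  rewrite (@intpos A _ mA) [RHS](@intpos A _ mA) in e.
  under eq_integral do rewrite EFinD.
  under [RHS]eq_integral do rewrite EFinD.
  rewrite ge0_integralD //; last 4 first.
  - by move=> x _; rewrite lee_fin funrpos_ge0.
  - exact/measurable_EFinP/measurable_funTS.
  - by move=> x _; rewrite lee_fin funrneg_ge0.
  - exact/measurable_EFinP/measurable_funTS.
  rewrite ge0_integralD //; last 4 first.
  - by move=> x _; rewrite lee_fin funrpos_ge0.
  - exact/measurable_EFinP/measurable_funTS.
  - by move=> x _; rewrite lee_fin funrneg_ge0.
  - exact/measurable_EFinP/measurable_funTS.
  apply: fin4'; last by rewrite -e.
  - have := integrable_pos_fin_num mA iX; by rewrite funerpos.
  - have := integrable_neg_fin_num mA iX; by rewrite funerneg.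
  - have := integrable_pos_fin_num mA iY; by rewrite funerpos.
  - have := integrable_neg_fin_num mA iY; by rewrite funerneg.
- exact: fromTC.
Qed.

Let XG := fun x => xi x * (f x / fC x).
Let mXG : measurable_fun setT XG.
Proof. apply: measurable_funM => //; apply: measurable_funM => //; exact: measurableT_comp (measV R) mfCT. Qed.
Let mqT : measurable_fun setT q := @TCT q mq.

Let Gpos x : 0 < fC x -> G x = fC x.
Proof. by move=> h; rewrite /G /funrpos; apply/max_idPl/ltW. Qed.

Lemma eqXp : (\int[P]_x (q x * Xp x)%:E = \int[P]_x (XG^\+ x)%:E)%E.
Proof.
apply: aeint => //.
- exact: measurable_funM.
- exact: measurable_funrpos.
move=> x fx fCx; rewrite /q Gpos // /Xp /XG /XF /funrpos mulrC maxM0 ?invr_ge0 ?ltW//.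
by rewrite mulrA.
Qed.

Lemma eqXn : (\int[P]_x (q x * Xn x)%:E = \int[P]_x (XG^\- x)%:E)%E.
Proof.
apply: aeint => //.
- exact: measurable_funM.
- exact: measurable_funrneg.
move=> x fx fCx; rewrite /q Gpos // /Xn /XG /XF /funrneg mulrC maxM0 ?invr_ge0 ?ltW//.
by rewrite mulNr mulrA.
Qed.

Lemma eqYp : (\int[P]_x (q x * Yp x)%:E = \int[P]_x (eta^\+ x)%:E)%E.
Proof.
transitivity (\int[P]_x ((q x * eta^\+ x) * F x)%:E)%E.
  apply: aeint => //.
  - exact: measurable_funM.
  - apply: measurable_funM => //; last exact: measurable_funrpos.
    by apply: measurable_funM => //; exact: measurable_funrpos.
  move=> x fx fCx; rewrite -mulrA; congr (_ * _).
  by rewrite /Yp /YF /F /funrpos /= (max_idPl fx) maxM0.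
rewrite KF; last 2 first.
- by apply: measurable_funM => //; exact: measurable_funrpos.
- by move=> x; rewrite mulr_ge0 // funrpos_ge0.
apply: aeint => //.
- apply: measurable_funM => //; last exact: measurable_funrpos.
  by apply: measurable_funM => //; exact: measurable_funrpos.
- exact: measurable_funrpos.
move=> x fx fCx; rewrite /q Gpos // mulrAC mulVf ?mul1r //.
by rewrite gt_eqF.
Qed.

Lemma eqYn : (\int[P]_x (q x * Yn x)%:E = \int[P]_x (eta^\- x)%:E)%E.
Proof.
transitivity (\int[P]_x ((q x * eta^\- x) * F x)%:E)%E.
  apply: aeint => //.
  - exact: measurable_funM.
  - apply: measurable_funM => //; last exact: measurable_funrpos.
    by apply: measurable_funM => //; exact: measurable_funrneg.
  move=> x fx fCx; rewrite -mulrA; congr (_ * _).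
  by rewrite /Yn /YF /F /funrpos /funrneg /= (max_idPl fx) maxM0 // mulNr.
rewrite KF; last 2 first.
- by apply: measurable_funM => //; exact: measurable_funrneg.
- by move=> x; rewrite mulr_ge0 // funrneg_ge0.
apply: aeint => //.
- apply: measurable_funM => //; last exact: measurable_funrpos.
  by apply: measurable_funM => //; exact: measurable_funrneg.
- exact: measurable_funrneg.
move=> x fx fCx; rewrite /q Gpos // mulrAC mulVf ?mul1r //.
by rewrite gt_eqF.
Qed.

Let mint (g : T -> R) : measurable_fun setT g -> measurable_fun setT (fun x => (g x)%:E).
Proof. by move=> mg; exact/measurable_EFinP. Qed.

Let finXGp : (\int[P]_x (XG^\+ x)%:E \is a fin_num)%E.
Proof. by have := integrable_pos_fin_num measurableT ixg; rewrite -/XG funerpos. Qed.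
Let finXGn : (\int[P]_x (XG^\- x)%:E \is a fin_num)%E.
Proof. by have := integrable_neg_fin_num measurableT ixg; rewrite -/XG funerneg. Qed.

Lemma finYp : (\int[P]_x (q x * Yp x)%:E \is a fin_num)%E.
Proof.
pose E1 := eta @^-1` `[0, +oo[%classic.
have CE1 : C E1 by apply: etaC; exact: measurable_itv.
pose a := fun x => \1_E1 x * q x.
have ma : measurable_fun [set: TC] (a : TC -> R).
  apply: measurable_funM => //; apply: measurable_indic.
  exact: sub_gen_smallest.
have maT : measurable_fun setT a := @TCT a ma.
have a0 x : 0 <= a x by rewrite /a indicE mulr_ge0.
have aq x : a x <= q x.
  by rewrite /a indicE; case: (x \in E1); rewrite ?mul1r ?mul0r.
have := @KXY a ma a0.
rewrite (@aeint setT (fun x => a x * (Xp x + Yn x)) (fun x => a x * Xp x)) //; last 3 first.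
- by apply: measurable_funM => //; exact: measurable_funD.
- exact: measurable_funM.
- move=> x fx fCx; rewrite /a indicE; have [h|h] := leP 0 (eta x).
    rewrite mem_set; last by rewrite /E1 /preimage /= in_itv /= h.
    rewrite /Yn /YF /funrneg (max_idPr _) ?addr0 //.
    by rewrite lerNl oppr0 mulr_ge0.
  by rewrite memNset ?mul0r // /E1 /preimage /= in_itv /= leNgt h.
rewrite (@aeint setT (fun x => a x * (Yp x + Xn x)) (fun x => q x * Yp x + a x * Xn x)) //; last 3 first.
- by apply: measurable_funM => //; exact: measurable_funD.
- by apply: measurable_funD; exact: measurable_funM.
- move=> x fx fCx; rewrite /a indicE mulrDr; have [h|h] := leP 0 (eta x).
    by rewrite mem_set ?mul1r // /E1 /preimage /= in_itv /= h.
  rewrite memNset ?mul0r; last by rewrite /E1 /preimage /= in_itv /= leNgt h.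
  rewrite /Yp /YF /funrpos (max_idPr _) ?mulr0 //.
  by rewrite mulr_le0_ge0 // ltW.
under [in X in _ = X -> _]eq_integral do rewrite EFinD.
rewrite ge0_integralD //; last 4 first.
- by move=> x _; rewrite lee_fin mulr_ge0 // funrpos_ge0.
- by apply: mint; exact: measurable_funM.
- by move=> x _; rewrite lee_fin mulr_ge0 // funrneg_ge0.
- by apply: mint; exact: measurable_funM.
move=> e.
have h1 : (\int[P]_x (q x * Yp x)%:E <= \int[P]_x (XG^\+ x)%:E)%E.
  apply: (@le_trans _ _ (\int[P]_x (a x * Xp x)%:E)%E).
    rewrite e leeDl //; apply: integral_ge0 => x _.
    by rewrite lee_fin mulr_ge0 // funrneg_ge0.
  rewrite -eqXp; apply: ge0_le_integral => //.
  - by move=> x _; rewrite lee_fin mulr_ge0 // funrpos_ge0.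
  - by apply: mint; exact: measurable_funM.
  - by apply: mint; exact: measurable_funM.
  - by move=> x _; rewrite lee_fin ler_wpM2r ?funrpos_ge0 ?aq.
rewrite ge0_fin_numE; last by apply: integral_ge0 => x _; rewrite lee_fin mulr_ge0 // funrpos_ge0.
apply: (le_lt_trans h1); rewrite -ge0_fin_numE //.
by apply: integral_ge0 => x _; rewrite lee_fin funrpos_ge0.
Qed.

Lemma finYn : (\int[P]_x (q x * Yn x)%:E \is a fin_num)%E.
Proof.
pose E1 := eta @^-1` `]-oo, 0[%classic.
have CE1 : C E1 by apply: etaC; exact: measurable_itv.
pose a := fun x => \1_E1 x * q x.
have ma : measurable_fun [set: TC] (a : TC -> R).
  apply: measurable_funM => //; apply: measurable_indic.
  exact: sub_gen_smallest.
have maT : measurable_fun setT a := @TCT a ma.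
have a0 x : 0 <= a x by rewrite /a indicE mulr_ge0.
have aq x : a x <= q x.
  by rewrite /a indicE; case: (x \in E1); rewrite ?mul1r ?mul0r.
have := @KXY a ma a0.
rewrite (@aeint setT (fun x => a x * (Xp x + Yn x)) (fun x => a x * Xp x + q x * Yn x)) //; last 3 first.
- by apply: measurable_funM => //; exact: measurable_funD.
- by apply: measurable_funD; exact: measurable_funM.
- move=> x fx fCx; rewrite /a indicE mulrDr; have [h|h] := ltP (eta x) 0.
    by rewrite mem_set ?mul1r // /E1 /preimage /= in_itv /= h.
  rewrite memNset ?mul0r; last by rewrite /E1 /preimage /= in_itv /= ltNge h.
  rewrite /Yn /YF /funrneg (max_idPr _) ?mulr0 ?add0r //.
  by rewrite lerNl oppr0 mulr_ge0.
rewrite (@aeint setT (fun x => a x * (Yp x + Xn x)) (fun x => a x * Xn x)) //; last 3 first.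
- by apply: measurable_funM => //; exact: measurable_funD.
- exact: measurable_funM.
- move=> x fx fCx; rewrite /a indicE; have [h|h] := ltP (eta x) 0.
    rewrite mem_set; last by rewrite /E1 /preimage /= in_itv /= h.
    rewrite /Yp /YF /funrpos (max_idPr _) ?add0r //.
    by rewrite mulr_le0_ge0 // ltW.
  by rewrite memNset ?mul0r // /E1 /preimage /= in_itv /= ltNge h.
under [in X in X = _ -> _]eq_integral do rewrite EFinD.
rewrite ge0_integralD //; last 4 first.
- by move=> x _; rewrite lee_fin mulr_ge0 // funrpos_ge0.
- by apply: mint; exact: measurable_funM.
- by move=> x _; rewrite lee_fin mulr_ge0 // funrneg_ge0.
- by apply: mint; exact: measurable_funM.
move=> e.
have h1 : (\int[P]_x (q x * Yn x)%:E <= \int[P]_x (XG^\- x)%:E)%E.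
  apply: (@le_trans _ _ (\int[P]_x (a x * Xn x)%:E)%E).
    rewrite -e leeDr //; apply: integral_ge0 => x _.
    by rewrite lee_fin mulr_ge0 // funrpos_ge0.
  rewrite -eqXn; apply: ge0_le_integral => //.
  - by move=> x _; rewrite lee_fin mulr_ge0 // funrneg_ge0.
  - by apply: mint; exact: measurable_funM.
  - by apply: mint; exact: measurable_funM.
  - by move=> x _; rewrite lee_fin ler_wpM2r ?funrneg_ge0 ?aq.
rewrite ge0_fin_numE; last by apply: integral_ge0 => x _; rewrite lee_fin mulr_ge0 // funrneg_ge0.
apply: (le_lt_trans h1); rewrite -ge0_fin_numE //.
by apply: integral_ge0 => x _; rewrite lee_fin funrneg_ge0.
Qed.

Lemma main_eq : (\int[P]_x (xi x * (f x / fC x))%:E = \int[P]_x (eta x)%:E)%E.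
Proof.
have := @KXY q mq q0.
under eq_integral do rewrite mulrDr EFinD.
under [in X in _ = X -> _]eq_integral do rewrite mulrDr EFinD.
rewrite ge0_integralD //; last 4 first.
- by move=> x _; rewrite lee_fin mulr_ge0 // funrpos_ge0.
- by apply: mint; exact: measurable_funM.
- by move=> x _; rewrite lee_fin mulr_ge0 // funrneg_ge0.
- by apply: mint; exact: measurable_funM.
rewrite ge0_integralD //; last 4 first.
- by move=> x _; rewrite lee_fin mulr_ge0 // funrpos_ge0.
- by apply: mint; exact: measurable_funM.
- by move=> x _; rewrite lee_fin mulr_ge0 // funrneg_ge0.
- by apply: mint; exact: measurable_funM.
rewrite eqXp eqXn eqYp eqYn => e.
rewrite (@intpos setT eta measurableT) (@intpos setT XG measurableT).
apply: fin4 => //.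
- by rewrite -eqYp finYp.
- by rewrite -eqYn finYn.
Qed.

End Main.

Theorem proposition1 (R : realType) (d : measure_display) (T : measurableType d)
  (P0 : probability T R) (eps : R) (C : set (set T)) (rho : (T -> R) -> R) :
  measure_is_complete P0 ->
  0 < eps < 1 ->
  is_sub_sigma_algebra C ->
  sublinear_op P0 (2 + eps) rho ->
  standing_assumption P0 eps rho ->
  stable P0 eps C rho ->
  proper_op P0 eps rho ->
  forall f, repD P0 eps rho f ->
  forall xi : T -> R, measurable_fun setT xi ->
    P0.-integrable setT (EFin \o xi) ->
    (forall g, repD P0 eps rho g ->
       P0.-integrable setT (fun x => (xi x * g x)%:E)) ->
  forall eta, cond_exp P0 C f xi eta ->
  exists2 fbar, repD P0 eps rho fbar &
    (\int[P0]_x (xi x * fbar x)%:E = \int[P0]_x (eta x)%:E)%E.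
Proof.
move=> _ _ [sC CM] _ _ Hstab Hprop f Hf xi mxi _ Hxig eta [etaC ietaf etaA].
have [fC [fCC ifC fCA] Hg] := Hstab f Hf.
exists (fun x => f x / fC x) => //.
have [[mf f0 _] _] := Hf.
pose N := fC @^-1` `]-oo, 0]%classic.
have CN : C N by apply: fCC; exact: measurable_itv.
have mN := CM _ CN.
have intN0 : (\int[P0]_(x in N) (f x)%:E = 0)%E.
  apply/eqP; rewrite eq_le; apply/andP; split.
  - have -> : (\int[P0]_(x in N) (f x)%:E = \int[P0]_(x in N) (fC x * cst 1 x)%:E)%E.
      by rewrite fCA //; apply: eq_integral => x _; rewrite /= mulr1.
    rewrite -(integral0 P0 N); apply: le_integral => //.
    + exact: integrableS ifC.
    + exact: integrable0.
    + by move=> x; rewrite inE /N /preimage /= in_itv /= mulr1 lee_fin.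
  - rewrite (@ae_eq_integral _ _ _ P0 N (fun x => ((f^\+) x)%:E)) //.
    + by apply: integral_ge0 => x _; rewrite lee_fin funrpos_ge0.
    + exact/measurable_EFinP/measurable_funTS.
    + exact/measurable_EFinP/measurable_funTS/measurable_funrpos.
    + by apply: filterS f0 => x fx _; rewrite /funrpos /= (max_idPl fx).
have PN : P0 N = 0 by apply/(Hprop f Hf N mN).
have pos : \forall x \ae P0, 0 < fC x.
  exists N; split => // x /= h; rewrite /N /preimage /= in_itv /= leNgt.
  exact/negP.
have good : \forall x \ae P0, 0 <= f x /\ 0 < fC x.
  by apply: filterS2 f0 pos => x a b; split.
exact: (@main_eq _ _ _ P0 C sC CM _ _ _ _ mf mxi fCC etaC fCA etaA (Hxig f Hf) ietaf (Hxig _ Hg) good).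
Qed.
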